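(* Let $R$ be a commutative ring, $n\ge 2$ an integer, and $S=\{m_1,\dots,m_n\}\subseteq R\setminus(\{0\}\cup R^\times)$ a set of $n$ pairwise coprime non-zero non-units, and $m=m_1m_2\cdots m_n$. Let $V$ be the set of perfect divisors of $m$ with respect to $S$, and define $\le$ on $V$ by $a\le b$ iff $a=b$ or $a\mid b$. Then $(V,\le)$ is a partially ordered set of cardinality $|V|=2^n-2$, and the perfect divisor graph $\mathrm{pdg}(S)$ is a partial order graph.
   Context: Rings have $1\neq 0$; $R^\times$ is the unit group. Elements $a,b$ are coprime if $ra+sb=1$ for some $r,s\in R$. A perfect divisor of $m$ with respect to $S$ is an element $d\neq m$ that is a product of distinct elements of $S$ (a product $\prod_{j\in J} m_j$ with $\emptyset\neq J\subseteq\{1,\dots,n\}$). The perfect divisor graph $\mathrm{pdg}(S)$ is the simple undirected graph whose vertex set is the set of perfect divisors of $m$ with respect to $S$, two distinct vertices $a,b$ being adjacent iff $a\mid b$ or $b\mid a$. A partial order graph is a graph of the form $G_A$ for a poset $(A,\le)$: vertex set $A$, distinct $a,b$ adjacent iff $a\le b$ or $b\le a$. *)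

(* Defs.v *)
From mathcomp Require Import all_boot all_algebra.
Set Implicit Arguments. Unset Strict Implicit. Unset Printing Implicit Defensive.
Import GRing.Theory.
Local Open Scope ring_scope.

Definition rdvd (R : comNzRingType) (a b : R) : Prop := exists c : R, b = c * a.

Definition runit (R : comNzRingType) (a : R) : Prop := exists u : R, a * u = 1.

Definition rcoprime (R : comNzRingType) (a b : R) : Prop :=
  exists r s : R, r * a + s * b = 1.

Definition mprod (R : comNzRingType) (n : nat) (ms : 'I_n -> R) : R :=
  \prod_(j < n) ms j.

Definition perfect_divisor (R : comNzRingType) (n : nat) (ms : 'I_n -> R)
  (d : R) : Prop :=
  d <> mprod ms /\ exists J : {set 'I_n}, J != set0 /\ d = \prod_(j in J) ms j.

Definition pd_le (R : comNzRingType) (a b : R) : Prop := a = b \/ rdvd a b.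

Definition is_poset (T : Type) (V : T -> Prop) (le : T -> T -> Prop) : Prop :=
  (forall a, V a -> le a a) /\
  (forall a b, V a -> V b -> le a b -> le b a -> a = b) /\
  (forall a b c, V a -> V b -> V c -> le a b -> le b c -> le a c).

Definition pdg_adj (R : comNzRingType) (a b : R) : Prop :=
  a <> b /\ (rdvd a b \/ rdvd b a).

Definition is_partial_order_graph (T : Type) (V : T -> Prop)
  (adj : T -> T -> Prop) : Prop :=
  exists le : T -> T -> Prop, is_poset V le /\
    (forall a b, V a -> V b -> (adj a b <-> (a <> b /\ (le a b \/ le b a)))).

(* Main.v *)
Require Import Defs.
From mathcomp Require Import all_boot all_algebra.
From mathcomp Require Import ring.
Local Open Scope ring_scope.
Import GRing.Theory.
Set Implicit Arguments. Unset Strict Implicit.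

Lemma cop_mul (R : comNzRingType) (a b c : R) :
  rcoprime a b -> rcoprime a c -> rcoprime a (b * c).
Proof.
move=> [r [s e1]] [r' [s' e2]].
exists (r * r' * a + r * s' * c + s * b * r'), (s * s').
have -> : 1 = (r * a + s * b) * (r' * a + s' * c) by rewrite e1 e2 mulr1.
ring.
Qed.

Section Aux.
Variables (R : comNzRingType) (n : nat) (ms : 'I_n -> R).
Hypothesis hnu : forall i, ~ runit (ms i).
Hypothesis hcop : forall i j, i <> j -> rcoprime (ms i) (ms j).

Definition PP (J : {set 'I_n}) : R := \prod_(j in J) ms j.

Lemma sub_of_dvd J K : rdvd (PP J) (PP K) -> J \subset K.
Proof.
move=> [c hc]; apply/subsetP => i iJ; apply/negPn/negP => iK.
have cop : rcoprime (ms i) (PP K).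
  rewrite /PP; apply: (big_ind (rcoprime (ms i))).
  - by exists 0, 1; rewrite mul0r add0r mulr1.
  - by move=> x y; apply: cop_mul.
  - by move=> j jK; apply: hcop => eij; rewrite eij jK in iK.
move: cop => [r [s e]].
case: (@hnu i).
rewrite /PP (bigD1 i iJ) /= in hc.
set p := \prod_(j in J | j != i) ms j in hc.
exists (r + s * (c * p)).
rewrite -e /PP hc; ring.
Qed.

Lemma PP_inj J K : PP J = PP K -> J = K.
Proof.
move=> e; apply/eqP; rewrite eqEsubset; apply/andP; split; apply: sub_of_dvd;
  exists 1; by rewrite mul1r e.
Qed.

Lemma mprodE : mprod ms = PP setT.
Proof. by rewrite /mprod /PP; apply: eq_bigl => j; rewrite in_setT. Qed.

End Aux.

Theorem lemma3p2 (R : comNzRingType) (n : nat) (ms : 'I_n -> R)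
  (hn : (2 <= n)%N)
  (hinj : injective ms)
  (hnz : forall i, ms i <> 0)
  (hnu : forall i, ~ runit (ms i))
  (hcop : forall i j, i <> j -> rcoprime (ms i) (ms j)) :
  is_poset (perfect_divisor ms) (@pd_le R) /\
  (exists s : seq R, uniq s /\ size s = (2 ^ n - 2)%N /\
     forall d, d \in s <-> perfect_divisor ms d) /\
  is_partial_order_graph (perfect_divisor ms) (@pdg_adj R).
Proof.
have poset : is_poset (perfect_divisor ms) (@pd_le R).
  split; first by move=> a _; left.
  split.
    move=> a b [_ [J [_ ->]]] [_ [K [_ ->]]] [//|hab] [//|hba].
    congr (PP ms); apply/eqP; rewrite eqEsubset.
    by rewrite (sub_of_dvd hnu hcop hab) (sub_of_dvd hnu hcop hba).
  move=> a b c _ _ _ [->//|[x hx]] [<-|[y hy]]; first by right; exists x.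
  by right; exists (y * x); rewrite hy hx mulrA.
split; first exact: poset.
split; last first.
  exists (@pd_le R); split=> // a b _ _; split.
    by move=> [ne [h|h]]; split=> //; [left|right]; right.
  move=> [ne [[e|h]|[e|h]]].
  - by case: ne.
  - by split=> //; left.
  - by case: ne.
  - by split=> //; right.
set A := [pred J : {set 'I_n} | (J != set0) && (J != setT)].
exists (map (PP ms) (enum A)); split.
  rewrite map_inj_in_uniq ?enum_uniq // => J K _ _; exact: PP_inj.
split.
  rewrite size_map -cardE.
  have n0 : (0 < n)%N by apply: leq_trans hn.
  have hT : #|{set 'I_n}| = (2 ^ n)%N.
    have hp : #|powerset [set: 'I_n]| = (2 ^ n)%N.
      by rewrite card_powerset cardsT card_ord.
    rewrite -hp; apply: eq_card => J.
    by rewrite powersetE subsetT.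
  have ne : (setT : {set 'I_n}) != set0.
    by apply/set0Pn; exists (Ordinal n0); rewrite in_setT.
  have h2 : #|{set 'I_n}| = (#|A| + 2)%N.
    rewrite (cardD1 (set0 : {set 'I_n})) (cardD1 (setT : {set 'I_n})) !inE ne /=.
    rewrite !add1n addn2; congr (_.+2).
    by apply: eq_card => J; rewrite !inE andbT andbC.
  by rewrite -hT h2 addnK.
move=> d; split.
  move=> /mapP [J]; rewrite mem_enum /A /= => /andP [J0 JT] ->.
  split; last by exists J.
  rewrite mprodE => /(PP_inj hnu hcop) eJ; by rewrite eJ eqxx in JT.
move=> [dm [J [J0 dE]]]; subst d; apply: map_f; rewrite mem_enum inE J0 /=.
apply/negP => /eqP eJ; apply: dm; by rewrite mprodE -eJ.
Qed.
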